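(* Let $n,m\ge 5$ be integers with $m\equiv 1\pmod 4$ and $n\equiv 3\pmod 4$. Then $\gamma_t(C_n\times C_m)\le\frac{(n+1)(m+1)}{4}-3$ and $\gamma_p(C_n\times C_m)\le\frac{(n+1)(m+1)}{4}-2$.
   Context: All graphs are finite, simple and undirected. $C_n$ denotes the cycle of order $n$ and $G\times H$ the Cartesian product of graphs. For a graph $G$ without isolated vertices: a set $D\subseteq V(G)$ is a total dominating set if every vertex of $G$ (including those in $D$) has a neighbour in $D$; $\gamma_t(G)$ is the minimum size of a total dominating set. A set $D\subseteq V(G)$ is a paired dominating set if every vertex outside $D$ has a neighbour in $D$ and the induced subgraph $G[D]$ has a perfect matching; $\gamma_p(G)$ is the minimum size of a paired dominating set. *)

(* Defs.v *)
From mathcomp Require Import all_boot.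
Set Implicit Arguments. Unset Strict Implicit. Unset Printing Implicit Defensive.

(* A simple graph is a symmetric irreflexive relation e on a finType T. *)

(* Cycle C_n on vertex set 'I_n: i ~ j iff j = i+1 mod n or i = j+1 mod n
   (for n >= 3 this is the n-cycle). *)
Definition cycle_adj (n : nat) : rel 'I_n :=
  fun i j => (j == (i.+1 %% n) :> nat) || (i == (j.+1 %% n) :> nat).

Definition cart_adj (T U : finType) (e : rel T) (f : rel U) : rel (T * U) :=
  fun x y => ((x.1 == y.1) && f x.2 y.2) || ((x.2 == y.2) && e x.1 y.1).

Definition total_dominating (T : finType) (e : rel T) (D : {set T}) : bool :=
  [forall v, exists u, (u \in D) && e v u].

Definition has_perfect_matching (T : finType) (e : rel T) (D : {set T}) : bool :=
  [exists p : {ffun T -> T}, forall x in D,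
    [&& p x \in D, p (p x) == x, p x != x & e x (p x)]].

Definition paired_dominating (T : finType) (e : rel T) (D : {set T}) : bool :=
  [forall v, (v \notin D) ==> [exists u, (u \in D) && e v u]] && has_perfect_matching e D.

(* gamma_t : minimum size of a total dominating set (default #|T| if none). *)
Definition gamma_t (T : finType) (e : rel T) : nat :=
  \big[minn/#|T|]_(D : {set T} | total_dominating e D) #|D|.

Definition gamma_p (T : finType) (e : rel T) : nat :=
  \big[minn/#|T|]_(D : {set T} | paired_dominating e D) #|D|.

(* Main.v *)
Require Import Defs.
From mathcomp Require Import zify.
From mathcomp Require Import all_boot.
Set Implicit Arguments. Unset Strict Implicit. Unset Printing Implicit Defensive.

Lemma bigmin_le (T : finType) (P : pred T) (F : T -> nat) x i : P i -> \big[minn/x]_(j | P j) F j <= F i.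
Proof.
move=> Pi.
elim: (index_enum T) (mem_index_enum i) => // j s IH; rewrite inE big_cons.
case/orP=> [/eqP <-|/IH h]; first by rewrite Pi geq_minl.
case: (P j); last exact: h.
by rewrite geq_min h orbT.
Qed.

Definition cyc (N i j : nat) : Prop :=
  j = i.+1 \/ i = j.+1 \/ (i.+1 = N /\ j = 0) \/ (j.+1 = N /\ i = 0).
Definition nbr (N M x y x' y' : nat) : Prop :=
  (x = x' /\ cyc M y y') \/ (y = y' /\ cyc N x x').

Lemma modS1 k N : k < N -> k.+1 %% N = if k.+1 == N then 0 else k.+1.
Proof. move=> h; case: eqP => [->|ne]; [exact: modnn | apply: modn_small; lia]. Qed.

Lemma cyc_adj N (i j : 'I_N) : cyc N i j -> cycle_adj i j.
Proof.
rewrite /cyc /cycle_adj (modS1 (ltn_ord i)) (modS1 (ltn_ord j)).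
have := ltn_ord i; have := ltn_ord j.
case: ifP => ?; case: ifP => ?; lia.
Qed.

Lemma nbr_adj N M (u v : 'I_N * 'I_M) :
  nbr N M u.1 u.2 v.1 v.2 -> cart_adj (@cycle_adj N) (@cycle_adj M) u v.
Proof.
case: u v => [x y] [x' y'] /=; rewrite /cart_adj /=.
case=> [[e h]|[e h]].
  by rewrite (_ : x == x') ?(cyc_adj h) //; apply/eqP/val_inj.
by rewrite (_ : y == y') ?(cyc_adj h) ?orbT //; apply/eqP/val_inj.
Qed.

Lemma ex_nb N M (D : {set 'I_N.+1 * 'I_M.+1}) (P : nat -> nat -> bool)
  (HD : forall u, (u \in D) = P u.1 u.2) (v : 'I_N.+1 * 'I_M.+1) x' y' :
  (x' < N.+1 /\ y' < M.+1 /\ P x' y' /\ nbr N.+1 M.+1 v.1 v.2 x' y') ->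
  [exists u, (u \in D) && cart_adj (@cycle_adj N.+1) (@cycle_adj M.+1) v u].
Proof.
case=> hx [hy [hP hn]]; apply/existsP; exists (inord x', inord y').
rewrite HD /= !inordK // hP /=; apply: nbr_adj => /=; rewrite !inordK //.
Qed.
Arguments ex_nb {N M D P} HD {v} x' y'.


Definition inDp (a b x y : nat) : bool :=
  ((y %% 4 == 0) && ((x %% 4 == 1) || (x %% 4 == 2)) && ~~ (((y == 0) || (y == 4*b)) && (x == 4*a+2)))
  || ((y %% 4 == 2) && ((x %% 4 == 0) || (x %% 4 == 3) || (x == 4*a+2))).
Definition inDt (a b x y : nat) : bool :=
  (inDp a b x y && ~~ (((x == 1) && (y == 0)) || ((x == 1) && (y == 4*b)) || ((x == 4*a+2) && (y == 2))))
  || ((x == 0) && ((y == 1) || (y == 4*b-1))).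

Definition Dt a b : {set 'I_(4*a+2).+1 * 'I_(4*b).+1} := [set v : 'I_(4*a+2).+1 * 'I_(4*b).+1 | inDt a b v.1 v.2].
Definition Dp a b : {set 'I_(4*a+2).+1 * 'I_(4*b).+1} := [set v : 'I_(4*a+2).+1 * 'I_(4*b).+1 | inDp a b v.1 v.2].

Ltac nb X Y := match goal with H : forall u, (u \in _) = _ |- _ => apply: (ex_nb H X Y) end; unfold inDt, inDp, nbr, cyc; simpl; lia.



Lemma mod4P x : [\/ x %% 4 = 0, x %% 4 = 1, x %% 4 = 2 | x %% 4 = 3].
Proof.
have : x %% 4 < 4 by rewrite ltn_mod.
case: (x %% 4) => [|[|[|[|k]]]] // _; [exact: Or41|exact: Or42|exact: Or43|exact: Or44].
Qed.

Ltac nb2 X Y := match goal with H : forall u, (u \in _) = _ |- _ => apply: (ex_nb H X Y) end; simpl;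
  split; [lia | split; [lia | split; [unfold inDt, inDp; lia | unfold nbr, cyc; lia]]].

Lemma tdom a b : 0 < a -> 0 < b ->
  total_dominating (cart_adj (@cycle_adj (4*a+2).+1) (@cycle_adj (4*b).+1)) (Dt a b).
Proof.
move=> ha hb; apply/forallP => -[[x hx] [y hy]].
have HD : forall u, (u \in Dt a b) = inDt a b u.1 u.2 by move=> u; rewrite inE.
have [ry|ry|ry|ry] := mod4P y; have [rx|rx|rx|rx] := mod4P x.
- have [e1|n1] := eqVneq x 0; last nb2 x.+1 y.
  have [e2|n2] := eqVneq y 0; first nb2 0 1.
  have [e3|n3] := eqVneq y (4*b); [nb2 0 (4*b-1) | nb2 x.+1 y].
- have [e1|n1] := eqVneq x (4*a+1); last nb2 x.+1 y.
  have [e2|n2] := eqVneq y 0; first nb2 x (4*b).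
  have [e3|n3] := eqVneq y (4*b); [nb2 x 0 | nb2 x.+1 y].
- have [e1|n1] := eqVneq x 2; last nb2 x.-1 y.
  have [e2|n2] := eqVneq y 0; first nb2 2 (4*b).
  have [e3|n3] := eqVneq y (4*b); [nb2 2 0 | nb2 x.-1 y].
- nb2 x.-1 y.
- nb2 x y.+1.
- have [e1|n1] := eqVneq x 1; last nb2 x y.-1.
  have [e2|n2] := eqVneq y 1; [nb2 0 1 | nb2 x y.-1].
- have [e1|n1] := eqVneq x (4*a+2); last nb2 x y.-1.
  have [e2|n2] := eqVneq y 1; [nb2 0 1 | nb2 x y.+1].
- nb2 x y.+1.
- have [e1|n1] := eqVneq x 0; last nb2 x.-1 y.
  have [e2|n2] := eqVneq y 2; [nb2 0 1 | nb2 (4*a+2) y].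
- nb2 x.-1 y.
- have [e1|n1] := eqVneq x (4*a+2); [nb2 0 y | nb2 x.+1 y].
- nb2 x.+1 y.
- nb2 x y.-1.
- have [e1|n1] := eqVneq x 1; last nb2 x y.+1.
  have [e2|n2] := eqVneq y (4*b-1); [nb2 0 (4*b-1) | nb2 x y.+1].
- have [e1|n1] := eqVneq x (4*a+2); last nb2 x y.+1.
  have [e2|n2] := eqVneq y 3; last nb2 x y.-1.
  have [e3|n3] := eqVneq b 1; [nb2 0 3 | nb2 (4*a+2) 4].
- nb2 x y.-1.
Qed.


Definition pmx (a b x y : nat) : nat :=
  if y %% 4 == 2 then
    (if x == 0 then 4*a+2 else if x == 4*a+2 then 0 else if x %% 4 == 3 then x.+1 else x.-1)
  else if x == 4*a+1 then (if y == 0 then x else if y == 4*b then x else x.+1)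
  else if x %% 4 == 1 then x.+1 else x.-1.
Definition pmy (a b x y : nat) : nat :=
  if y %% 4 == 0 then
    (if x == 4*a+1 then (if y == 0 then 4*b else if y == 4*b then 0 else y) else y)
  else y.

Ltac ev := unfold pmx, pmy; repeat case: ifP => ?; lia.
Ltac pmcase a b x y X Y :=
  (have -> : pmx a b x y = X by ev);
  (have -> : pmy a b x y = Y by ev);
  (have -> : pmx a b X Y = x by ev);
  (have -> : pmy a b X Y = y by ev);
  split; [lia | lia | unfold inDp; lia | unfold nbr, cyc; lia | split; reflexivity].

Lemma pm_spec a b x y : 0 < a -> 0 < b -> x < (4*a+2).+1 -> y < (4*b).+1 -> inDp a b x y ->
  [/\ pmx a b x y < (4*a+2).+1, pmy a b x y < (4*b).+1, inDp a b (pmx a b x y) (pmy a b x y),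
   nbr (4*a+2).+1 (4*b).+1 x y (pmx a b x y) (pmy a b x y)
   & pmx a b (pmx a b x y) (pmy a b x y) = x /\ pmy a b (pmx a b x y) (pmy a b x y) = y].
Proof.
move=> ha hb hx hy.
have [ry|ry|ry|ry] := mod4P y; have [rx|rx|rx|rx] := mod4P x;
  rewrite {1}/inDp ry rx /=; try by [].
- move=> _; have [e1|n1] := eqVneq x (4*a+1); last pmcase a b x y x.+1 y.
  have [e2|n2] := eqVneq y 0; first pmcase a b x y x (4*b).
  have [e3|n3] := eqVneq y (4*b); [pmcase a b x y x 0 | pmcase a b x y x.+1 y].
- move=> hD; have [e1|n1] := eqVneq x (4*a+2); last pmcase a b x y x.-1 y.
  have [e2|n2] := eqVneq y 0; first by move: hD; rewrite e1 e2 !eqxx.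
  have [e3|n3] := eqVneq y (4*b); first by move: hD; rewrite e1 e3 !eqxx orbT.
  pmcase a b x y x.-1 y.
- move=> _; have [e1|n1] := eqVneq x 0; [pmcase a b x y (4*a+2) y | pmcase a b x y x.-1 y].
- move=> /eqP e; lia.
- move=> /eqP e; pmcase a b x y 0 y.
- move=> _; pmcase a b x y x.+1 y.
Qed.


Ltac nb3 X Y := match goal with H : forall u, (u \in _) = _ |- _ => apply: (ex_nb H X Y) end; simpl;
  split; [lia | split; [lia | split; [unfold inDp; lia | unfold nbr, cyc; lia]]].

Lemma pdom a b : 0 < a -> 0 < b ->
  paired_dominating (cart_adj (@cycle_adj (4*a+2).+1) (@cycle_adj (4*b).+1)) (Dp a b).
Proof.
move=> ha hb; apply/andP; split.
  apply/forallP => -[[x hx] [y hy]]; apply/implyP => _.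
  have HD : forall u, (u \in Dp a b) = inDp a b u.1 u.2 by move=> u; rewrite inE.
  have [ry|ry|ry|ry] := mod4P y; have [rx|rx|rx|rx] := mod4P x.
  - nb3 x.+1 y.
  - have [e1|n1] := eqVneq x (4*a+1); last nb3 x.+1 y.
    have [e2|n2] := eqVneq y 0; first nb3 x (4*b).
    have [e3|n3] := eqVneq y (4*b); [nb3 x 0 | nb3 x.+1 y].
  - nb3 x.-1 y.
  - nb3 x.-1 y.
  - nb3 x y.+1.
  - nb3 x y.-1.
  - have [e1|n1] := eqVneq x (4*a+2); [nb3 x y.+1 | nb3 x y.-1].
  - nb3 x y.+1.
  - have [e1|n1] := eqVneq x 0; [nb3 (4*a+2) y | nb3 x.-1 y].
  - nb3 x.-1 y.
  - have [e1|n1] := eqVneq x (4*a+2); [nb3 0 y | nb3 x.+1 y].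
  - nb3 x.+1 y.
  - nb3 x y.-1.
  - nb3 x y.+1.
  - have [e1|n1] := eqVneq x (4*a+2); [nb3 x y.-1 | nb3 x y.+1].
  - nb3 x y.-1.
apply/existsP.
exists [ffun v : 'I_(4*a+2).+1 * 'I_(4*b).+1 =>
  ((inord (pmx a b v.1 v.2) : 'I_(4*a+2).+1), (inord (pmy a b v.1 v.2) : 'I_(4*b).+1))].
apply/forallP => -[[x hx] [y hy]]; apply/implyP; rewrite inE /= => hv.
have [h1 h2 h3 h4 [h5 h6]] := pm_spec ha hb hx hy hv.
clear hv.
rewrite !ffunE /= !inordK // h5 h6.
apply/and4P; split.
- by rewrite inE /= !inordK.
- by apply/eqP; congr pair; apply: val_inj; rewrite /= inordK.
- apply/eqP => E; have := congr1 (fun u => nat_of_ord u.1) E.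
  have := congr1 (fun u => nat_of_ord u.2) E; rewrite /= !inordK //.
  clear h3; move: h4; rewrite /nbr /cyc; lia.
- by apply: nbr_adj; rewrite /= !inordK.
Qed.


Definition gy (y : nat) : nat := if y == 1 then 0 else y.+1 %/ 2.

Lemma inord_eq n u v : u < n.+1 -> v < n.+1 -> (inord u == inord v :> 'I_n.+1) = (u == v).
Proof.
move=> hu hv; apply/eqP/eqP => [/(congr1 val)|->] //; rewrite /= !inordK //.
Qed.

Lemma card_img a b (D : {set 'I_(4*a+2).+1 * 'I_(4*b).+1})
  (F : {set 'I_(2*b).+1 * 'I_(2*a).+2}) (P : nat -> nat -> bool)
  (HD : forall v, (v \in D) = P v.1 v.2) :
  (forall x y x' y', x < (4*a+2).+1 -> y < (4*b).+1 -> x' < (4*a+2).+1 -> y' < (4*b).+1 ->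
     P x y -> P x' y' -> gy y = gy y' -> x %/ 2 = x' %/ 2 -> x = x' /\ y = y') ->
  (forall x y, x < (4*a+2).+1 -> y < (4*b).+1 -> P x y ->
     ((inord (gy y) : 'I_(2*b).+1), (inord (x %/ 2) : 'I_(2*a).+2)) \notin F) ->
  #|D| <= (2*b).+1 * (2*a).+2 - #|F|.
Proof.
move=> Hinj HF.
have gyb : forall y, y < (4*b).+1 -> gy y < (2*b).+1 by move=> y hy; rewrite /gy; case: ifP; lia.
pose g (v : 'I_(4*a+2).+1 * 'I_(4*b).+1) :=
  ((inord (gy v.2) : 'I_(2*b).+1), (inord (v.1 %/ 2) : 'I_(2*a).+2)).
have ginj : {in D &, injective g}.
  move=> [[x hx] [y hy]] [[x' hx'] [y' hy']]; rewrite !HD /= => p p' E.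
  have := congr1 (fun u => nat_of_ord u.1) E; have := congr1 (fun u => nat_of_ord u.2) E.
  rewrite /= !inordK ?gyb //; try lia.
  move=> e2 e1; have [ex ey] := Hinj _ _ _ _ hx hy hx' hy' p p' e1 e2.
  by subst; congr pair; apply: val_inj.
rewrite -(card_in_imset ginj).
have sub : [set g v | v in D] \subset ~: F.
  apply/subsetP => _ /imsetP [[[x hx] [y hy]] vD ->]; rewrite inE.
  by apply: HF => //; rewrite -HD.
apply: leq_trans (subset_leq_card sub) _.
by rewrite [X in X <= _]cardsCs setCK card_prod !card_ord.
Qed.


Lemma inDp_even a b x y : inDp a b x y -> (y %% 4 = 0) \/ (y %% 4 = 2).
Proof. have [ry|ry|ry|ry] := mod4P y; rewrite /inDp ry /=; try by []; move=> _; lia. Qed.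

Lemma inDp_row a b x x' y : x < (4*a+2).+1 -> x' < (4*a+2).+1 ->
  inDp a b x y -> inDp a b x' y -> x %/ 2 = x' %/ 2 -> x = x'.
Proof.
move=> hx hx'.
have [ry|ry|ry|ry] := mod4P y; have [rx|rx|rx|rx] := mod4P x; have [rx'|rx'|rx'|rx'] := mod4P x';
  rewrite /inDp ry rx rx' /=; try by []; move=> h1 h2 h3; lia.
Qed.

Lemma inDp_last a b x y : x < (4*a+2).+1 -> y < (4*b).+1 -> inDp a b x y -> x %/ 2 = 2*a+1 ->
  [/\ y <> 0, y <> 4*b & y %% 4 = 2 \/ y %% 4 = 0].
Proof.
move=> hx hy hD hq; have ex : x = 4*a+2 by lia.
move: hD; rewrite ex; have [ry|ry|ry|ry] := mod4P y; rewrite /inDp ry /=; try by [];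
  move=> h; split; lia.
Qed.

Lemma card_Dp a b : 0 < a -> 0 < b -> #|Dp a b| <= (2*b).+1 * (2*a).+2 - 2.
Proof.
move=> ha hb.
set F := [set ((inord 0 : 'I_(2*b).+1), (inord (2*a+1) : 'I_(2*a).+2));
              ((inord (2*b) : 'I_(2*b).+1), (inord (2*a+1) : 'I_(2*a).+2))].
have cF : #|F| = 2.
  rewrite cards2 xpair_eqE !inord_eq; lia.
suff: #|Dp a b| <= (2*b).+1 * (2*a).+2 - #|F| by rewrite cF.
apply: (card_img (P := inDp a b)).
- by move=> v; rewrite inE.
- move=> x y x' y' hx hy hx' hy' p p' eg ex.
  have ey : y = y'.
    have := inDp_even p; have := inDp_even p'; move: eg; clear p p' ex; rewrite /gy.
    case: ifP => ?; case: ifP => ?; lia.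
  subst y'; split => //; exact: inDp_row hx hx' p p' ex.
- move=> x y hx hy p.
  have gb : gy y < (2*b).+1 by move: hy; clear p; rewrite /gy; case: ifP => ?; lia.
  have xb : x %/ 2 < (2*a).+2 by clear p; lia.
  have [ex|ex] := eqVneq (x %/ 2) (2*a+1).
    have [h1 h2 h3] := inDp_last hx hy p ex; clear p.
    rewrite !inE !xpair_eqE !inord_eq //; last lia.
    rewrite /gy; case: ifP; lia.
  clear p; rewrite !inE !xpair_eqE !inord_eq //; lia.
Qed.


Lemma ord_inord_eq n (u : 'I_n.+1) i : i < n.+1 -> (u == inord i) = (val u == i).
Proof. by move=> hi; rewrite -val_eqE /= inordK. Qed.

Lemma card_Dt a b : 0 < a -> 0 < b -> #|Dt a b| <= (2*b).+1 * (2*a).+2 - 3.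
Proof.
move=> ha hb.
pose c x y := ((inord x : 'I_(4*a+2).+1), (inord y : 'I_(4*b).+1)).
set R := [set c 1 0; c 1 (4*b); c (4*a+2) 2].
set A := [set c 0 1; c 0 (4*b-1)].
have cR : #|R| = 3.
  rewrite /R -setUA cardsU1 cards2 !inE !xpair_eqE !inord_eq; lia.
have cA : #|A| <= 2 by rewrite cards2; case: (_ != _).
have sR : R \subset Dp a b.
  apply/subsetP => v; rewrite !inE => /orP [/orP [/eqP->|/eqP->]|/eqP->];
  rewrite /= !inordK; unfold inDp; lia.
have sT : Dt a b \subset (Dp a b :\: R) :|: A.
  { apply/subsetP => -[[x hx] [y hy]]; rewrite !inE /= !xpair_eqE !ord_inord_eq /=.
    - rewrite /inDt; case/orP => [/andP [hp hr]|/andP [h0 /orP [h1|h1]]].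
      + by rewrite hr hp.
      + by rewrite h0 h1 orbT.
      + by rewrite h0 h1 !orbT.
    all: lia. }
have := subset_leq_card sT; have := cardsUI (Dp a b :\: R) A.
rewrite cardsD (setIidPr sR) cR.
have := subset_leq_card sR; rewrite cR.
have := card_Dp ha hb; set K := (2*b).+1 * (2*a).+2; clearbody K A R c.
move=> hDp h3 hU hT; apply: leq_trans hT _.
apply: leq_trans (leq_addr #|(Dp a b :\: R) :&: A| _) _; rewrite hU.
move: hDp h3 cA; set d := #|Dp a b|; set e := #|A|; clearbody d e; lia.
Qed.


Theorem theorem5p4 (n m : nat) :
  5 <= n -> 5 <= m -> m %% 4 = 1 -> n %% 4 = 3 ->
  gamma_t (cart_adj (@cycle_adj n) (@cycle_adj m)) <= (n.+1 * m.+1) %/ 4 - 3 /\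
  gamma_p (cart_adj (@cycle_adj n) (@cycle_adj m)) <= (n.+1 * m.+1) %/ 4 - 2.
Proof.
move=> hn5 hm5 hm hn.
have [a ea] : exists a, n = (4*a+2).+1 by exists (n %/ 4); lia.
have [b eb] : exists b, m = (4*b).+1 by exists (m %/ 4); lia.
subst n m.
have ha : 0 < a by lia.
have hb : 0 < b by lia.
have E : ((4*a+2).+2 * (4*b).+2) %/ 4 = (2*b).+1 * (2*a).+2.
  rewrite (_ : (4*a+2).+2 * (4*b).+2 = (2*b).+1 * (2*a).+2 * 4); first by rewrite mulnK.
  nia.
rewrite E; split.
- rewrite /gamma_t; exact: leq_trans (bigmin_le _ _ (tdom ha hb)) (card_Dt ha hb).
- rewrite /gamma_p; exact: leq_trans (bigmin_le _ _ (pdom ha hb)) (card_Dp ha hb).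
Qed.
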